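(* Let $\kappa$ be a regular infinite cardinal, $I$ a nonempty set of players, and $(S,\Sigma_S)$ a $\kappa$-measurable space such that for all $s\neq s'$ in $S$ there is $E\in\Sigma_S$ with $s\in E$, $s'\notin E$. Let $\Omega$ be the set of $\kappa$-descriptions, $\Sigma_\Omega=\{[\varphi]:\varphi\in\Phi^\kappa\}$, and $T_i^*$, $\theta^*$ as defined in the context. Then $\langle \Omega,\Sigma_\Omega,(T_i^* )_{i\in I},\theta^*\rangle$ is a universal $\kappa$-type space on $S$ for player set $I$: it is a $\kappa$-type space, and for every $\kappa$-type space $\underline M$ on $S$ for player set $I$ there is a unique type morphism from $\underline M$ to it.
   Context: A $\kappa$-field on a nonempty set $M$ is a field $\Sigma$ of subsets of $M$ such that $\bigcap\mathcal E\in\Sigma$ whenever $\mathcal E\subseteq\Sigma$ and $|\mathcal E|<\kappa$; $(M,\Sigma)$ is then a $\kappa$-measurable space. For such a space, $\Delta^\kappa(M,\Sigma)$ denotes the set of finitely additive probability measures on $(M,\Sigma)$, endowed with the $\kappa$-field generated by the sets $\{\mu:\mu(E)\ge p\}$, $E\in\Sigma$, $p\in[0,1]$. A $\kappa$-type space on $S$ for player set $I$ is a tuple $\langle M,\Sigma,(T_i)_{i\in I},\theta\rangle$ where $M$ is a nonempty set, $\Sigma$ a $\kappa$-field on $M$, each $T_i:M\to\Delta^\kappa(M,\Sigma)$ is measurable and satisfies: for all $m\in M$ and $A\in\Sigma$, if $\{m'\in M:T_i(m')=T_i(m)\}\subseteq A$ then $T_i(m)(A)=1$; and $\theta:M\to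 S$ is $\Sigma$–$\Sigma_S$-measurable. A type morphism from $\langle M',\Sigma',(T'_i),\theta'\rangle$ to $\langle M,\Sigma,(T_i),\theta\rangle$ is a $\Sigma'$–$\Sigma$-measurable $f:M'\to M$ with $\theta'(m')=\theta(f(m'))$ and $T_i(f(m'))(E)=T'_i(m')(f^{-1}(E))$ for all $m'\in M'$, $E\in\Sigma$, $i\in I$. The set $\Phi^\kappa$ of $\kappa$-expressions is the least set such that: every $E\in\Sigma_S$ is in $\Phi^\kappa$; if $\varphi\in\Phi^\kappa$ then $\neg\varphi\in\Phi^\kappa$ and $B_i^p(\varphi)\in\Phi^\kappa$ for all $i\in I$, $p\in[0,1]$; if $\Psi\subseteq\Phi^\kappa$ is nonempty with $|\Psi|<\kappa$ then $\bigwedge_{\varphi\in\Psi}\varphi\in\Phi^\kappa$. In a $\kappa$-type space $\underline M$ define $E^{\underline M}=\theta^{-1}(E)$, $(\neg\varphi)^{\underline M}=M\setminus\varphi^{\underline M}$, $(B_i^p(\varphi))^{\underline M}=\{m:T_i(m)(\varphi^{\underline M})\ge p\}$, $(\bigwedge_{\varphi\in\Psi}\varphi)^{\underline M}=\bigcap_{\varphi\in\Psi}\varphi^{\underline M}$. The $\kappa$-description of $m\in M$ is $D(m)=\{\varphi\in\Phi^\kappa: m\in\varphi^{\underline M}\}$. $\Omega$ is the set of all $\kappa$-descriptions of all states $m$ of all $\kappa$-type spaces on $S$ for player set $I$; for $\varphi\in\Phi^\kappa$, $[\varphi]=\{\omega\in\Omega:\varphi\in\omega\}$. For $\omega\in\Omega$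 and $i\in I$, $T_i^*(\omega)$ is the function on $\Sigma_\Omega$ given by $T_i^*(\omega)([\varphi])=\sup\{p\in[0,1]:B_i^p(\varphi)\in\omega\}$ (equivalently $T_i(m)(\varphi^{\underline M})$ for any $\kappa$-type space $\underline M$ and $m\in M$ with $D(m)=\omega$), and $\theta^*(\omega)$ is the unique $s\in S$ with $s\in E$ for all $E\in\Sigma_S\cap\omega$ (equivalently $\theta(m)$ for any such $m$). *)

(* Defs.v *)
From Stdlib Require Import Reals ClassicalEpsilon.
From Coquelicot Require Import Coquelicot.
Open Scope R_scope.

(* ---------- Cardinals: the cardinal kappa is represented by a type K. ---------- *)

Definition card_lt (K X : Type) : Prop :=
  (exists f : X -> K, forall x y, f x = f y -> x = y) /\
  ~ (exists g : K -> X, forall x y, g x = g y -> x = y).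

Definition infinite_card (K : Type) : Prop :=
  exists f : nat -> K, forall x y, f x = f y -> x = y.

(* kappa is regular: a union of fewer than kappa sets, each of size
   less than kappa, has size less than kappa (all such sets may be taken
   as subsets of K). *)
Definition regular_card (K : Type) : Prop :=
  forall (J : K -> Prop) (A : K -> K -> Prop),
    card_lt K {j | J j} ->
    (forall j, J j -> card_lt K {k | A j k}) ->
    card_lt K {k | exists j, J j /\ A j k}.

Definition kfield (K M : Type) (Sig : (M -> Prop) -> Prop) : Prop :=
  Sig (fun _ => True) /\
  (forall A, Sig A -> Sig (fun m => ~ A m)) /\
  (forall A B, Sig A -> Sig B -> Sig (fun m => A m /\ B m)) /\
  (forall E : (M -> Prop) -> Prop,
      (forall A, E A -> Sig A) -> card_lt K {A | E A} ->
      Sig (fun m => forall A, E A -> A m)).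

Definition kmeasurable_space (K M : Type) (Sig : (M -> Prop) -> Prop) : Prop :=
  (exists m : M, True) /\ kfield K M Sig.

Definition gen_kfield (K X : Type) (G : (X -> Prop) -> Prop) (A : X -> Prop) : Prop :=
  forall Sig : (X -> Prop) -> Prop, kfield K X Sig -> (forall B, G B -> Sig B) -> Sig A.

Definition measurable_map (M N : Type) (SigM : (M -> Prop) -> Prop)
  (SigN : (N -> Prop) -> Prop) (f : M -> N) : Prop :=
  forall A, SigN A -> SigM (fun m => A (f m)).

(* A measure is a function on all subsets, normalized to be 0 off Sig,
   so that equality of measures is equality of functions. *)
Definition fa_prob (M : Type) (Sig : (M -> Prop) -> Prop) (mu : (M -> Prop) -> R) : Prop :=
  (forall A, Sig A -> 0 <= mu A) /\
  mu (fun _ => True) = 1 /\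
  (forall A B, Sig A -> Sig B -> (forall m, A m -> B m -> False) ->
     mu (fun m => A m \/ B m) = mu A + mu B) /\
  (forall A, ~ Sig A -> mu A = 0).

Definition Delta_gen (M : Type) (Sig : (M -> Prop) -> Prop)
  (B : ((M -> Prop) -> R) -> Prop) : Prop :=
  exists E p, Sig E /\ 0 <= p <= 1 /\ B = (fun mu => mu E >= p).

Definition Delta_field (K M : Type) (Sig : (M -> Prop) -> Prop) :=
  gen_kfield K ((M -> Prop) -> R) (Delta_gen M Sig).

Definition type_space (K I S : Type) (SigS : (S -> Prop) -> Prop)
  (M : Type) (Sig : (M -> Prop) -> Prop)
  (T : I -> M -> (M -> Prop) -> R) (theta : M -> S) : Prop :=
  kmeasurable_space K M Sig /\
  (forall i m, fa_prob M Sig (T i m)) /\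
  (forall i, measurable_map M ((M -> Prop) -> R) Sig (Delta_field K M Sig) (T i)) /\
  (forall i m A, Sig A -> (forall m', T i m' = T i m -> A m') -> T i m A = 1) /\
  measurable_map M S Sig SigS theta.

Definition type_morphism (I S : Type)
  (M' : Type) (Sig' : (M' -> Prop) -> Prop) (T' : I -> M' -> (M' -> Prop) -> R) (theta' : M' -> S)
  (M : Type) (Sig : (M -> Prop) -> Prop) (T : I -> M -> (M -> Prop) -> R) (theta : M -> S)
  (f : M' -> M) : Prop :=
  measurable_map M' M Sig' Sig f /\
  (forall m', theta' m' = theta (f m')) /\
  (forall m' E i, Sig E -> T i (f m') E = T' i m' (fun x => E (f x))).

(* A conjunction over a set Psi of fewer than kappa expressions is written
   as a family f indexed by a nonempty subset A of K with |A| < kappa. *)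
Inductive expr (K I S : Type) (SigS : (S -> Prop) -> Prop) : Type :=
| ePrim (E : S -> Prop) (hE : SigS E)
| eNeg (phi : @expr K I S SigS)
| eBel (i : I) (p : R) (hp : 0 <= p <= 1) (phi : @expr K I S SigS)
| eAnd (A : K -> Prop) (f : K -> @expr K I S SigS)
       (hne : exists k, A k) (hsmall : card_lt K {k | A k}).


Fixpoint sem (K I S : Type) (SigS : (S -> Prop) -> Prop)
  (M : Type) (T : I -> M -> (M -> Prop) -> R) (theta : M -> S)
  (phi : @expr K I S SigS) : M -> Prop :=
  match phi with
  | ePrim E _ => fun m => E (theta m)
  | eNeg psi => fun m => ~ sem K I S SigS M T theta psi m
  | eBel i p _ psi => fun m => T i m (sem K I S SigS M T theta psi) >= p
  | eAnd A f _ _ => fun m => forall k, A k -> sem K I S SigS M T theta (f k) m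
  end.

Definition descr (K I S : Type) (SigS : (S -> Prop) -> Prop)
  (M : Type) (T : I -> M -> (M -> Prop) -> R) (theta : M -> S) (m : M) :
  @expr K I S SigS -> Prop := fun phi => sem K I S SigS M T theta phi m.

Definition Omega (K I S : Type) (SigS : (S -> Prop) -> Prop) : Type :=
  { w : @expr K I S SigS -> Prop |
    exists (M : Type) (Sig : (M -> Prop) -> Prop)
           (T : I -> M -> (M -> Prop) -> R) (theta : M -> S) (m : M),
      type_space K I S SigS M Sig T theta /\ w = descr K I S SigS M T theta m }.

Definition bracket (K I S : Type) (SigS : (S -> Prop) -> Prop)
  (phi : @expr K I S SigS) : Omega K I S SigS -> Prop :=
  fun w => proj1_sig w phi.

Definition SigOmega (K I S : Type) (SigS : (S -> Prop) -> Prop)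
  (A : Omega K I S SigS -> Prop) : Prop :=
  exists phi : @expr K I S SigS, A = bracket K I S SigS phi.

(* T_i^*(w)([phi]) = sup{p in [0,1] : B_i^p(phi) in w}; 0 off Sigma_Omega *)
Definition Tstar (K I S : Type) (SigS : (S -> Prop) -> Prop)
  (i : I) (w : Omega K I S SigS) (A : Omega K I S SigS -> Prop) : R :=
  real (Lub_Rbar (fun p => exists (phi : @expr K I S SigS) (hp : 0 <= p <= 1),
                      A = bracket K I S SigS phi /\ proj1_sig w (eBel K I S SigS i p hp phi))).

Lemma Omega_theta_ex (K I S : Type) (SigS : (S -> Prop) -> Prop) (w : Omega K I S SigS) :
  exists s : S, forall E (hE : SigS E), proj1_sig w (ePrim K I S SigS E hE) -> E s.
Proof.
  destruct w as [w0 Hw0]; simpl; destruct Hw0 as [M [Sig [T [theta [m [_ Hw]]]]]]; subst w0.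
  exists (theta m). intros E hE H. exact H.
Qed.

(* theta^*(w) = the (unique, by separation) s lying in every E in SigS /\ w *)
Definition thetastar (K I S : Type) (SigS : (S -> Prop) -> Prop) (w : Omega K I S SigS) : S :=
  proj1_sig (constructive_indefinite_description _ (Omega_theta_ex K I S SigS w)).

(* Main.v *)
Require Import Defs.
From Stdlib Require Import Reals ClassicalEpsilon FunctionalExtensionality PropExtensionality ProofIrrelevance Classical Lra.
From Coquelicot Require Import Coquelicot.
Open Scope R_scope.

Lemma sig_ext {A} {P : A -> Prop} (u v : {x | P x}) : proj1_sig u = proj1_sig v -> u = v.
Proof. destruct u, v; simpl; intros ->. f_equal; apply proof_irrelevance. Qed.

Lemma pred_ext {A} (P Q : A -> Prop) : (forall x, P x <-> Q x) -> P = Q.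
Proof. intros H; apply functional_extensionality; intros x; apply propositional_extensionality; auto. Qed.

Lemma card_lt_image (K X Y : Type) (h : X -> Y) :
  card_lt K X -> (forall y, exists x, y = h x) -> card_lt K Y.
Proof.
  intros [[f fi] nf] hs.
  destruct (choice _ hs) as [c hc].
  split.
  - exists (fun y => f (c y)). intros y y' e. apply fi in e. rewrite (hc y), (hc y'), e. reflexivity.
  - intros [g gi]. apply nf. exists (fun k => c (g k)). intros x y e.
    apply gi. rewrite (hc (g x)), (hc (g y)), e. reflexivity.
Qed.

Lemma card2 (K : Type) : infinite_card K ->
  exists k0 k1 : K, k0 <> k1 /\ card_lt K {k | k = k0 \/ k = k1}.
Proof.
  intros [f fi]. exists (f 0%nat), (f 1%nat). split.
  - intro e. apply fi in e. discriminate.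
  - split.
    + exists (@proj1_sig _ _). intros x y e. apply sig_ext. exact e.
    + intros [g gi].
      assert (P : forall n, proj1_sig (g (f n)) = f 0%nat \/ proj1_sig (g (f n)) = f 1%nat)
        by (intro n; exact (proj2_sig (g (f n)))).
      assert (E : forall n m, proj1_sig (g (f n)) = proj1_sig (g (f m)) -> n = m).
      { intros n m e. apply fi, gi, sig_ext, e. }
      destruct (P 0%nat) as [a|a], (P 1%nat) as [b|b], (P 2%nat) as [c|c];
      first [ assert (0=1)%nat by (apply E; congruence)
            | assert (0=2)%nat by (apply E; congruence)
            | assert (1=2)%nat by (apply E; congruence)]; discriminate.
Qed.

Lemma kfield_of_family (K M : Type) (Sig : (M -> Prop) -> Prop) :
  infinite_card K ->
  Sig (fun _ => True) ->
  (forall A, Sig A -> Sig (fun m => ~ A m)) ->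
  (forall E : (M -> Prop) -> Prop,
      (forall A, E A -> Sig A) -> card_lt K {A | E A} ->
      Sig (fun m => forall A, E A -> A m)) ->
  kfield K M Sig.
Proof.
  intros inf hT hC hF. split; [exact hT|]. split; [exact hC|]. split; [|exact hF].
  intros A B hA hB.
  destruct (card2 K inf) as [k0 [k1 [hne hc]]].
  assert (HE : Sig (fun m => forall X, (X = A \/ X = B) -> X m)).
  { apply hF. intros X [->| ->]; auto.
    apply (card_lt_image K _ _
      (fun k : {k | k = k0 \/ k = k1} =>
         if excluded_middle_informative (proj1_sig k = k0)
         then exist (fun X => X = A \/ X = B) A (or_introl eq_refl)
         else exist (fun X => X = A \/ X = B) B (or_intror eq_refl)) hc).
    intros [X [e|e]].
    - exists (exist _ k0 (or_introl eq_refl)). simpl.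
      destruct (excluded_middle_informative (k0 = k0)) as [_|n]; [|congruence].
      apply sig_ext; simpl; exact e.
    - exists (exist _ k1 (or_intror eq_refl)). simpl.
      destruct (excluded_middle_informative (k1 = k0)) as [h|_]; [congruence|].
      apply sig_ext; simpl; exact e. }
  replace (fun m => A m /\ B m) with (fun m => forall X, (X = A \/ X = B) -> X m); [exact HE|].
  apply pred_ext; intro m; split.
  - intros H; split; apply H; auto.
  - intros [a b] X [-> | ->]; auto.
Qed.
Lemma sem_meas (K I S : Type) (SigS : (S -> Prop) -> Prop) M Sig T theta :
  type_space K I S SigS M Sig T theta ->
  forall phi, Sig (sem K I S SigS M T theta phi).
Proof.
  intros [[_ [hT [hC [hB hF]]]] [hP [hM [hI hth]]]] phi.
  induction phi as [E hE | phi IH | i p hp phi IH | A f IH hne hs]; simpl.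
  - exact (hth E hE).
  - exact (hC _ IH).
  - apply (hM i (fun mu => mu (sem K I S SigS M T theta phi) >= p)).
    intros Sig' _ hG. apply hG. exists (sem K I S SigS M T theta phi), p. auto.
  - set (E := fun B => exists k, A k /\ B = sem K I S SigS M T theta (f k)).
    assert (H : Sig (fun m => forall B, E B -> B m)).
    { apply hF.
      - intros B [k [_ ->]]. apply IH.
      - apply (card_lt_image K _ _ (fun k : {k | A k} =>
           exist E (sem K I S SigS M T theta (f (proj1_sig k)))
                   (ex_intro _ (proj1_sig k) (conj (proj2_sig k) eq_refl))) hs).
        intros [B [k [hk e]]]. exists (exist _ k hk). apply sig_ext. simpl. exact e. }
    replace (fun m => forall k, A k -> sem K I S SigS M T theta (f k) m)
      with (fun m => forall B, E B -> B m); [exact H|].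
    apply pred_ext; intro m; split.
    + intros h k hk. apply h. exists k; auto.
    + intros h B [k [hk ->]]. auto.
Qed.

Definition toOmega (K I S : Type) (SigS : (S -> Prop) -> Prop) M Sig T theta
  (H : type_space K I S SigS M Sig T theta) (m : M) : Omega K I S SigS.
Proof.
  exists (descr K I S SigS M T theta m). exists M, Sig, T, theta, m. auto.
Defined.

Lemma Omega_rep (K I S : Type) (SigS : (S -> Prop) -> Prop) (w : Omega K I S SigS) :
  exists M Sig T theta m, type_space K I S SigS M Sig T theta /\
    proj1_sig w = descr K I S SigS M T theta m.
Proof. destruct w as [w0 H]. exact H. Qed.

Lemma bracket_sem (K I S : Type) (SigS : (S -> Prop) -> Prop) M Sig T theta
  (H : type_space K I S SigS M Sig T theta) phi (G : Omega K I S SigS -> Prop) :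
  bracket K I S SigS phi = G -> forall m,
  sem K I S SigS M T theta phi m <-> G (toOmega K I S SigS M Sig T theta H m).
Proof.
  intros e m. rewrite <- e. unfold bracket. simpl. unfold descr. tauto.
Qed.

Lemma fa_le1 (K M : Type) Sig mu A : kfield K M Sig -> fa_prob M Sig mu -> Sig A -> mu A <= 1.
Proof.
  intros [hT [hC _]] [h0 [h1 [hA _]]] hSA.
  assert (e : (fun m => A m \/ ~ A m) = (fun _ => True)).
  { apply pred_ext; intro m; split; auto. intros _; apply classic. }
  pose proof (hA A (fun m => ~ A m) hSA (hC _ hSA) (fun m a na => na a)) as h.
  cbv beta in h. rewrite e, h1 in h. pose proof (h0 _ (hC _ hSA)). lra.
Qed.

Lemma Tstar_val (K I S : Type) (SigS : (S -> Prop) -> Prop) M Sig T theta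
  (H : type_space K I S SigS M Sig T theta) (w : Omega K I S SigS) m i phi :
  proj1_sig w = descr K I S SigS M T theta m ->
  Tstar K I S SigS i w (bracket K I S SigS phi) = T i m (sem K I S SigS M T theta phi).
Proof.
  intros Hw. unfold Tstar. rewrite Hw.
  set (x := T i m (sem K I S SigS M T theta phi)).
  assert (hx : 0 <= x <= 1).
  { pose proof (sem_meas K I S SigS M Sig T theta H phi). destruct H as [[_ hk] [hP _]].
    split; [apply (proj1 (hP i m)); auto| apply (fa_le1 K M Sig); auto]. }
  rewrite (is_lub_Rbar_unique _ (Finite x)); [reflexivity|].
  split.
  - intros p [phi' [hp [e hw]]]. unfold descr in hw; simpl in hw.
    assert (es : sem K I S SigS M T theta phi' = sem K I S SigS M T theta phi).
    { apply pred_ext; intro m'. rewrite (bracket_sem K I S SigS M Sig T theta H phi' _ (eq_sym e) m').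
      unfold bracket; simpl; unfold descr; tauto. }
    rewrite es in hw. simpl. unfold x. lra.
  - intros b hb. apply hb. exists phi, hx. split; [reflexivity|]. unfold descr; simpl. unfold x. lra.
Qed.

Lemma Tstar_nonbracket (K I S : Type) (SigS : (S -> Prop) -> Prop) i w A :
  ~ SigOmega K I S SigS A -> Tstar K I S SigS i w A = 0.
Proof.
  intros nA. unfold Tstar.
  rewrite (is_lub_Rbar_unique _ m_infty); [reflexivity|].
  split.
  - intros p [phi [hp [e _]]]. exfalso; apply nA; exists phi; exact e.
  - intros b _; destruct b; simpl; trivial.
Qed.

Lemma thetastar_val (K I S : Type) (SigS : (S -> Prop) -> Prop) M Sig T theta :
  kmeasurable_space K S SigS ->
  (forall s s' : S, s <> s' -> exists E, SigS E /\ E s /\ ~ E s') ->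
  type_space K I S SigS M Sig T theta -> forall (w : Omega K I S SigS) m,
  proj1_sig w = descr K I S SigS M T theta m ->
  thetastar K I S SigS w = theta m.
Proof.
  intros [_ [_ [hC _]]] hsep H w m Hw. unfold thetastar.
  destruct (constructive_indefinite_description _ _) as [s hs]. simpl.
  destruct (classic (s = theta m)) as [e|n]; auto.
  destruct (hsep s (theta m) n) as [E [hE [Es nE]]].
  exfalso. apply (hs _ (hC _ hE)); [|exact Es].
  rewrite Hw. exact nE.
Qed.
Lemma w_neg (K I S : Type) (SigS : (S -> Prop) -> Prop) (w : Omega K I S SigS) phi :
  proj1_sig w (eNeg K I S SigS phi) <-> ~ proj1_sig w phi.
Proof. destruct (Omega_rep K I S SigS w) as [M [Sig [T [theta [m [H Hw]]]]]]. rewrite Hw. unfold descr; simpl. tauto. Qed.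

Lemma w_and (K I S : Type) (SigS : (S -> Prop) -> Prop) (w : Omega K I S SigS) A f hne hs :
  proj1_sig w (eAnd K I S SigS A f hne hs) <-> forall k, A k -> proj1_sig w (f k).
Proof. destruct (Omega_rep K I S SigS w) as [M [Sig [T [theta [m [H Hw]]]]]]. rewrite Hw. unfold descr; simpl. tauto. Qed.

Lemma w_prim (K I S : Type) (SigS : (S -> Prop) -> Prop) :
  kmeasurable_space K S SigS ->
  (forall s s' : S, s <> s' -> exists E, SigS E /\ E s /\ ~ E s') ->
  forall (w : Omega K I S SigS) E hE,
  proj1_sig w (ePrim K I S SigS E hE) <-> E (thetastar K I S SigS w).
Proof.
  intros kms hsep w E hE.
  destruct (Omega_rep K I S SigS w) as [M [Sig [T [theta [m [H Hw]]]]]].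
  rewrite (thetastar_val K I S SigS M Sig T theta kms hsep H w m Hw), Hw. unfold descr; simpl. tauto.
Qed.

Lemma w_bel (K I S : Type) (SigS : (S -> Prop) -> Prop) (w : Omega K I S SigS) i p hp phi :
  proj1_sig w (eBel K I S SigS i p hp phi) <-> Tstar K I S SigS i w (bracket K I S SigS phi) >= p.
Proof.
  destruct (Omega_rep K I S SigS w) as [M [Sig [T [theta [m [H Hw]]]]]].
  rewrite (Tstar_val K I S SigS M Sig T theta H w m i phi Hw), Hw. unfold descr; simpl. tauto.
Qed.

Lemma SigOmega_kfield (K I S : Type) (SigS : (S -> Prop) -> Prop) :
  infinite_card K ->
  kmeasurable_space K S SigS ->
  (forall s s' : S, s <> s' -> exists E, SigS E /\ E s /\ ~ E s') ->
  kfield K (Omega K I S SigS) (SigOmega K I S SigS).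
Proof.
  intros inf kms hsep.
  assert (hT : SigS (fun _ => True)) by apply kms.
  set (eT := ePrim K I S SigS (fun _ => True) hT).
  assert (bT : (fun _ : Omega K I S SigS => True) = bracket K I S SigS eT).
  { apply pred_ext; intro w. unfold bracket, eT. rewrite w_prim by assumption. tauto. }
  apply kfield_of_family; [exact inf| | |].
  - exists eT. exact bT.
  - intros A [phi ->]. exists (eNeg K I S SigS phi). apply pred_ext; intro w.
    unfold bracket. rewrite w_neg. tauto.
  - intros E hE hc.
    destruct (classic (exists A, E A)) as [[A0 hA0] | nE].
    2:{ exists eT. rewrite <- bT. apply pred_ext; intro w; split; auto.
        intros _ A hA. exfalso; apply nE; exists A; exact hA. }
    pose proof hc as [[j ji] _].
    assert (hch : forall k : K, exists phi : Defs.expr K I S SigS,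
               forall a : {A | E A}, j a = k -> proj1_sig a = bracket K I S SigS phi).
    { intro k. destruct (classic (exists a, j a = k)) as [[a ea] | na].
      - destruct (hE (proj1_sig a) (proj2_sig a)) as [phi ephi].
        exists phi. intros a' ea'. rewrite <- ea in ea'. apply ji in ea'. subst a'. exact ephi.
      - exists eT. intros a ea. exfalso; apply na; exists a; exact ea. }
    destruct (choice _ hch) as [F hF].
    set (Aset := fun k => exists a : {A | E A}, j a = k).
    assert (hne : exists k, Aset k) by (exists (j (exist _ A0 hA0)); exists (exist _ A0 hA0); reflexivity).
    assert (hs : card_lt K {k | Aset k}).
    { apply (card_lt_image K _ _ (fun a : {A | E A} => exist Aset (j a) (ex_intro _ a eq_refl)) hc).
      intros [k [a ea]]. exists a. apply sig_ext. simpl. symmetry; exact ea. }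
    exists (eAnd K I S SigS Aset F hne hs).
    apply pred_ext; intro w. unfold bracket at 1. rewrite w_and. split.
    + intros h k [a ea]. pose proof (hF k a ea) as e.
      pose proof (h (proj1_sig a) (proj2_sig a)) as hw. rewrite e in hw. exact hw.
    + intros h A hA. pose proof (hF _ (exist _ A hA) eq_refl) as e. simpl in e. rewrite e.
      apply h. exists (exist _ A hA). reflexivity.
Qed.
Lemma unit_space (K I S : Type) (SigS : (S -> Prop) -> Prop) (s : S) :
  type_space K I S SigS unit (fun _ => True)
    (fun _ _ A => if excluded_middle_informative (A tt) then 1 else 0) (fun _ => s).
Proof.
  split; [split; [exists tt; auto| repeat split; intros; exact Logic.I] |].
  split; [|split; [|split]].
  - intros i m. split; [|split; [|split]].
    + intros A _. destruct (excluded_middle_informative _); lra.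
    + destruct (excluded_middle_informative _) as [_|n]; [auto| exfalso; auto].
    + intros A B _ _ d. destruct (excluded_middle_informative (A tt)), (excluded_middle_informative (B tt)), (excluded_middle_informative (A tt \/ B tt)); try lra; exfalso; firstorder.
    + intros A n; exfalso; auto.
  - intros i A _. exact Logic.I.
  - intros i m A _ h. specialize (h tt eq_refl). destruct (excluded_middle_informative (A tt)); tauto.
  - intros A _; exact Logic.I.
Qed.

Lemma bracket_true (K I S : Type) (SigS : (S -> Prop) -> Prop) hT :
  kmeasurable_space K S SigS ->
  (forall s s' : S, s <> s' -> exists E, SigS E /\ E s /\ ~ E s') ->
  (fun _ : Omega K I S SigS => True) = bracket K I S SigS (ePrim K I S SigS (fun _ => True) hT).
Proof.
  intros kms hsep. apply pred_ext; intro w. unfold bracket. rewrite w_prim by assumption. tauto.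
Qed.

Theorem theorem1 (K I S : Type) (SigS : (S -> Prop) -> Prop) :
  infinite_card K -> regular_card K ->
  (exists i : I, True) ->
  kmeasurable_space K S SigS ->
  (forall s s' : S, s <> s' -> exists E, SigS E /\ E s /\ ~ E s') ->
  type_space K I S SigS (Omega K I S SigS) (SigOmega K I S SigS)
             (Tstar K I S SigS) (thetastar K I S SigS) /\
  (forall (M : Type) (Sig : (M -> Prop) -> Prop)
          (T : I -> M -> (M -> Prop) -> R) (theta : M -> S),
     type_space K I S SigS M Sig T theta ->
     exists! f : M -> Omega K I S SigS,
       type_morphism I S M Sig T theta
                     (Omega K I S SigS) (SigOmega K I S SigS)
                     (Tstar K I S SigS) (thetastar K I S SigS) f).
Proof.
  intros inf reg [i0 _] kms hsep.
  assert (KO := SigOmega_kfield K I S SigS inf kms hsep).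
  assert (hT : SigS (fun _ => True)) by apply kms.
  assert (hU : forall A B, SigOmega K I S SigS A -> SigOmega K I S SigS B ->
                           SigOmega K I S SigS (fun w => A w \/ B w)).
  { intros A B hA hB. destruct KO as [_ [hC [hB2 _]]].
    pose proof (hC _ (hB2 _ _ (hC _ hA) (hC _ hB))) as h. cbv beta in h.
    replace (fun w => A w \/ B w) with (fun w => ~ (~ A w /\ ~ B w)); [exact h|].
    apply pred_ext; intro w. pose proof (classic (A w)); pose proof (classic (B w)); tauto. }
  split.
  - split; [|split; [|split; [|split]]].
    + split; [|exact KO]. destruct kms as [[s _] _].
      exists (toOmega K I S SigS _ _ _ _ (unit_space K I S SigS s) tt). exact Logic.I.
    + intros i w.
      destruct (Omega_rep K I S SigS w) as [M [Sig [T [theta [m [H Hw]]]]]].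
      pose proof H as [Hk [hP [hM [hI hth]]]].
      split; [|split; [|split]].
      * intros A [phi ->]. rewrite (Tstar_val K I S SigS M Sig T theta H w m i phi Hw).
        apply (proj1 (hP i m)). apply (sem_meas K I S SigS M Sig T theta H).
      * rewrite (bracket_true K I S SigS hT kms hsep).
        rewrite (Tstar_val K I S SigS M Sig T theta H w m i _ Hw).
        exact (proj1 (proj2 (hP i m))).
      * intros A B [phi ->] [psi ->] d.
        destruct (hU _ _ (ex_intro _ phi eq_refl) (ex_intro _ psi eq_refl)) as [chi echi].
        rewrite echi, !(Tstar_val K I S SigS M Sig T theta H w m i _ Hw).
        assert (es : sem K I S SigS M T theta chi =
                     (fun x => sem K I S SigS M T theta phi x \/ sem K I S SigS M T theta psi x)).
        { apply pred_ext; intro x.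
          rewrite (bracket_sem K I S SigS M Sig T theta H chi _ (eq_sym echi) x).
          unfold bracket; simpl; unfold descr. tauto. }
        rewrite es. apply (proj1 (proj2 (proj2 (hP i m))));
          [apply (sem_meas K I S SigS M Sig T theta H) .. |].
        intros x a b. exact (d (toOmega K I S SigS M Sig T theta H x) a b).
      * intros A nA. apply Tstar_nonbracket; exact nA.
    + intros i A hA.
      apply (hA (fun B => SigOmega K I S SigS (fun w => B (Tstar K I S SigS i w)))).
      * destruct KO as [k1 [k2 [k3 k4]]].
        split; [exact k1|split; [intros B hB; exact (k2 _ hB)|
                 split; [intros B C hB hC; exact (k3 _ _ hB hC)|]]].
        intros E hE hc.
        set (E' := fun B => exists A, E A /\ B = (fun w => A (Tstar K I S SigS i w))).
        assert (h : SigOmega K I S SigS (fun w => forall B, E' B -> B w)).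
        { apply k4.
          - intros B [A' [hA' ->]]. exact (hE A' hA').
          - apply (card_lt_image K _ _ (fun a : {A | E A} =>
               exist E' (fun w => proj1_sig a (Tstar K I S SigS i w))
                 (ex_intro _ (proj1_sig a) (conj (proj2_sig a) eq_refl))) hc).
            intros [B [A' [hA' e]]]. exists (exist _ A' hA'). apply sig_ext. simpl. exact e. }
        replace (fun w => (fun m => forall A, E A -> A m) (Tstar K I S SigS i w))
          with (fun w => forall B, E' B -> B w); [exact h|].
        apply pred_ext; intro w; split.
        -- intros h' A' hA'. apply (h' (fun w => A' (Tstar K I S SigS i w))). exists A'; auto.
        -- intros h' B [A' [hA' ->]]. apply h'; exact hA'.
      * intros B [E [p [[phi ->] [hp ->]]]].
        exists (eBel K I S SigS i p hp phi). apply pred_ext; intro w.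
        change (Tstar K I S SigS i w (bracket K I S SigS phi) >= p <->
                proj1_sig w (eBel K I S SigS i p hp phi)).
        rewrite w_bel. tauto.
    + intros i w A [phi ->] hsub.
      destruct (Omega_rep K I S SigS w) as [M [Sig [T [theta [m [H Hw]]]]]].
      pose proof H as [Hk [hP [hM [hI hth]]]].
      rewrite (Tstar_val K I S SigS M Sig T theta H w m i phi Hw).
      apply hI; [apply (sem_meas K I S SigS M Sig T theta H)|].
      intros m' e.
      assert (et : Tstar K I S SigS i (toOmega K I S SigS M Sig T theta H m') = Tstar K I S SigS i w).
      { apply functional_extensionality; intro B. unfold Tstar. rewrite Hw.
        unfold toOmega, descr; simpl. rewrite e. reflexivity. }
      exact (hsub _ et).
    + intros E hE. exists (ePrim K I S SigS E hE). apply pred_ext; intro w.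
      unfold bracket. rewrite w_prim by assumption. tauto.
  - intros M Sig T theta H. exists (toOmega K I S SigS M Sig T theta H). split.
    + split; [|split].
      * intros A [phi ->]. exact (sem_meas K I S SigS M Sig T theta H phi).
      * intros m. symmetry. apply (thetastar_val K I S SigS M Sig T theta kms hsep H). reflexivity.
      * intros m E i [phi ->].
        rewrite (Tstar_val K I S SigS M Sig T theta H (toOmega K I S SigS M Sig T theta H m) m i phi eq_refl). reflexivity.
    + intros g [gm [gth gT]].
      assert (key : forall phi m, proj1_sig (g m) phi <-> sem K I S SigS M T theta phi m).
      { induction phi as [E hE | phi IH | i p hp phi IH | A f IH hne hs]; intro m.
        - rewrite w_prim, <- gth by assumption. simpl. tauto.
        - rewrite w_neg, IH. simpl. tauto.
        - rewrite w_bel. rewrite (gT m (bracket K I S SigS phi) i (ex_intro _ phi eq_refl)).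
          replace (fun x => bracket K I S SigS phi (g x)) with (sem K I S SigS M T theta phi).
          + simpl. tauto.
          + apply pred_ext; intro x. unfold bracket. rewrite IH. tauto.
        - rewrite w_and. simpl. split; intros h k hk; apply IH; auto; apply h; auto. }
      apply functional_extensionality; intro m. apply sig_ext.
      apply pred_ext; intro phi. simpl. unfold descr. rewrite key. tauto.
Qed.
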